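(* Let $\sigma$ be a profile of (mixed) strategies in a $k$-player alternating move game, with utility vector $(t_1,\dots,t_k)$. Then for every $\alpha>0$ there exists a cyclic path in the game graph $G$ whose average weight is at least $t_i-\alpha$ in every dimension $i$.
   Context: A $k$-player alternating move game has finite action sets $A_1,\dots,A_k$ and utilities $u_i:A_1\times\dots\times A_k\to[-1,1]$. In round $t$ player $j=1+(t\bmod k)$ chooses an action; the action vector $a^t$ consists of each player's most recent action; in round $t$ player $i$ receives $u_i(a^t)$ (utility $0$ in the first $k$ rounds). A mixed strategy maps histories to distributions over the player's actions. For a profile $\sigma$, $P_{i,t}(\sigma)$ is the expected value of $\frac1t\sum_{s=1}^t u_i(a^s)$, and player $i$'s utility is $t_i=\liminf_{t\to\infty}P_{i,t}(\sigma)$. The game graph $G$ has vertex set $(A_1\times\dots\times A_k)\times\{1,\dots,k\}$; there is an edge from $(\vec a,i)$ to $(\vec b,i+1)$ (with $k+1$ read as $1$) iff $\vec a$ and $\vec b$ differ at most in coordinate $i$, with weight vector $(u_1(\vec b),\dots,u_k(\vec b))$. A cyclic path is a finite path starting and ending at the same vertex; its average weight in dimension $i$ is the sum of the $i$-th weights of its edges divided by its length. *)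

(* Defs.v *)
From HB Require Import structures.
From mathcomp Require Import all_boot all_order all_algebra.
From mathcomp Require Import all_classical all_reals all_analysis.
Set Implicit Arguments. Unset Strict Implicit. Unset Printing Implicit Defensive.
Import Order.TTheory GRing.Theory Num.Theory.
Local Open Scope ring_scope.

Section AltGame.
(* Players are 0,...,k-1 (paper's player i+1 is our i); A i = action set of player i. *)
Variables (R : realType) (k : nat) (A : 'I_k -> finType).

Definition profile := {dffun forall i : 'I_k, A i}.
Definition move := {i : 'I_k & A i}.
(* a history: the sequence of moves made so far (oldest first) *)
Definition history := seq move.

Definition strategy (i : 'I_k) := history -> {ffun A i -> R}.
Definition is_distr (i : 'I_k) (d : {ffun A i -> R}) :=
  (forall a, 0 <= d a) /\ \sum_a d a = 1.
Definition is_mixed_profile (sigma : forall i, strategy i) :=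
  forall i h, is_distr (sigma i h).

(* In round t (t = 1,2,...) the player 1+(t mod k) (paper indexing), i.e.
   the player with 0-based index t mod k, moves. *)
Definition mover_ok (t : nat) (m : move) : bool := (nat_of_ord (tag m) == t %% k)%N.

(* probability that the first (size h) moves are exactly h, under sigma;
   computed on the reversed history rh *)
Fixpoint probr (sigma : forall i, strategy i) (rh : seq move) : R :=
  match rh with
  | [::] => 1
  | m :: rh' =>
      probr sigma rh' *
      (if mover_ok (size rh').+1 m then sigma (tag m) (rev rh') (tagged m) else 0)
  end.
Definition prob sigma (h : history) : R := probr sigma (rev h).

Fixpoint lastactr (rh : seq move) (j : 'I_k) : option (A j) :=
  match rh with
  | [::] => None
  | m :: rh' =>
      match tag m =P j with
      | ReflectT e => Some (eq_rect _ (fun x => A x) (tagged m) _ e)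
      | ReflectF _ => lastactr rh' j
      end
  end.
Definition lastact (h : history) (j : 'I_k) := lastactr (rev h) j.

Definition actvec (h : history) : option profile :=
  [pick a : profile | [forall j, lastact h j == Some (a j)]].

Definition round_util (u : forall i : 'I_k, profile -> R) (i : 'I_k)
    (s : nat) (h : history) : R :=
  if (s <= k)%N then 0 else
  match actvec h with Some a => u i a | None => 0 end.

Definition P (u : forall i : 'I_k, profile -> R) (sigma : forall i, strategy i)
    (i : 'I_k) (t : nat) : R :=
  \sum_(h : t.-tuple move)
     prob sigma h * ((t%:R)^-1 * \sum_(1 <= s < t.+1) round_util u i s (take s h)).

Definition game_utility u sigma (i : 'I_k) : \bar R :=
  limn_einf (fun t => (P u sigma i t)%:E).

Definition vertex := (profile * 'I_k)%type.
Definition gedge : rel vertex := fun v w =>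
  ((nat_of_ord w.2 == (v.2).+1 %% k)%N) &&
  [forall j, (j != v.2) ==> (v.1 j == w.1 j)].

(* A cyclic path: start vertex x and nonempty list p of successive vertices,
   forming a G-path from x and ending back at x. Its edges are the steps, and
   the weight of each edge is u(target), so the average weight in dimension i
   is (1/|p|) * sum_{w in p} u_i(w.1). *)
Definition cyclic_path (x : vertex) (p : seq vertex) : bool :=
  (0 < size p)%N && path gedge x p && (last x p == x).
Definition avg_weight (u : forall i : 'I_k, profile -> R) (i : 'I_k)
    (p : seq vertex) : R :=
  (size p)%:R^-1 * \sum_(w <- p) u i w.1.

End AltGame.

(* Main.v *)
Require Import Defs.
From HB Require Import structures.
From mathcomp Require Import all_boot all_order all_algebra.
From mathcomp Require Import all_classical all_reals all_analysis.
From mathcomp Require Import zify ring lra.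
Import Order.TTheory GRing.Theory Num.Theory.
Local Open Scope ring_scope.
Set Implicit Arguments. Unset Strict Implicit. Unset Printing Implicit Defensive.

Section Prob.
Variables (R : realType) (k : nat) (hk : (0 < k)%N) (A : 'I_k -> finType).
Variable sigma : forall i : 'I_k, strategy R A i.
Hypothesis hsigma : is_mixed_profile sigma.

Lemma prob_rcons (h : history A) m : prob sigma (rcons h m) =
  prob sigma h * (if mover_ok (size h).+1 m then sigma (tag m) h (tagged m) else 0).
Proof. by rewrite /prob rev_rcons /= revK size_rev. Qed.

Lemma prob_ge0 (h : history A) : 0 <= prob sigma h.
Proof.
elim/last_ind: h => [|h m IH]; first by rewrite /prob /=.
rewrite prob_rcons; apply: mulr_ge0 => //; case: ifP => // _.
exact: (hsigma _ _).1.
Qed.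

Lemma prob_ok (h : history A) : prob sigma h != 0 ->
  forall r m, (r < size h)%N -> mover_ok r.+1 (nth m h r).
Proof.
elim/last_ind: h => [|h m IH] H r m0; first by [].
move: H; rewrite prob_rcons size_rcons ltnS leq_eqVlt => H /orP [/eqP ->|lt].
  rewrite nth_rcons ltnn eqxx; move: H; case: ifP => //; by rewrite mulr0 eqxx.
rewrite nth_rcons lt; apply: IH => //.
by move: H; apply: contra => /eqP ->; rewrite mul0r.
Qed.

Lemma sum_mover t (h : history A) :
  \sum_(m : move A) (if mover_ok t m then sigma (tag m) h (tagged m) else 0) = 1.
Proof.
have -> : \sum_(m : move A) (if mover_ok t m then sigma (tag m) h (tagged m) else 0)
   = \sum_(i : 'I_k) \sum_(a : A i) (if (nat_of_ord i == t %% k)%N then sigma i h a else 0).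
  rewrite (@sig_big_dep _ 0 _ _ _ xpredT (fun _ => xpredT)
     (fun i a => (if (nat_of_ord i == t %% k)%N then sigma i h a else 0))) /=.
  by apply: eq_bigr => -[i a].
pose i0 : 'I_k := Ordinal (ltn_pmod t hk).
rewrite (bigD1 i0) //= (eq_bigr (fun a => sigma i0 h a)); last by move=> a _; rewrite eqxx.
rewrite (hsigma _ _).2 big1 ?addr0 //.
move=> i /negbTE ne; apply: big1 => a _.
suff -> : (nat_of_ord i == t %% k)%N = false by [].
by apply/negbTE; apply: contraFN ne => /eqP e; apply/eqP/val_inj.
Qed.

Lemma sum_prob (n : nat) (pre : history A) :
  \sum_(t : n.-tuple (move A)) prob sigma (pre ++ t) = prob sigma pre.
Proof.
elim: n pre => [|n IH] pre.
  rewrite (eq_bigr (fun _ => prob sigma pre)); last by move=> t _; rewrite tuple0 cats0.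
  by rewrite sumr_const card_tuple expn0 mulr1n.
rewrite (reindex (fun p : move A * n.-tuple (move A) => [tuple of p.1 :: p.2])) /=; last first.
  exists (fun t : n.+1.-tuple (move A) => (thead t, [tuple of behead t])).
    by move=> [m t] _ /=; congr pair; apply: val_inj.
  by move=> t _; apply: val_inj => /=; rewrite [in RHS](tuple_eta t).
rewrite -(pair_big xpredT xpredT (fun m (t : n.-tuple (move A)) => prob sigma (pre ++ m :: t))) /=.
rewrite (eq_bigr (fun m => prob sigma (rcons pre m))); last first.
  by move=> m _; rewrite -(IH (rcons pre m)); apply: eq_bigr => t _; rewrite cat_rcons.
rewrite (eq_bigr (fun m => prob sigma pre *
   (if mover_ok (size pre).+1 m then sigma (tag m) pre (tagged m) else 0))); last first.
  by move=> m _; rewrite prob_rcons.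
by rewrite -mulr_sumr sum_mover mulr1.
Qed.

End Prob.

Lemma modSmod (m d : nat) : ((m %% d).+1 %% d = m.+1 %% d)%N.
Proof. by rewrite -addn1 modnDml addn1. Qed.

Section Walk.
Variables (R : realType) (k : nat) (hk : (0 < k)%N) (A : 'I_k -> finType).
Variable sigma : forall i : 'I_k, strategy R A i.
Variable a0 : profile A.

Lemma lastactr_cons_ne (m : move A) l j : tag m != j -> lastactr (m :: l) j = lastactr l j.
Proof. by move=> ne /=; case: (tag m =P j) => // e; rewrite e eqxx in ne. Qed.

Lemma lastactr_some (l : seq (move A)) j m : m \in l -> tag m = j -> lastactr l j != None.
Proof.
elim: l => [//|m' l IH]; rewrite inE => /orP [/eqP <-|ml] tj /=.
  by case: (tag m =P j).
by case: (tag m' =P j) => // _; apply: IH.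
Qed.

Lemma actvec_some (h : history A) : (forall j, lastact h j != None) -> actvec h != None.
Proof.
move=> H; rewrite /actvec; case: pickP => // F.
pose a : profile A := finfun (fun j => odflt (a0 j) (lastact h j)).
exfalso; move: (F a) => /= /negbT/negP; apply; apply/forallP => j.
rewrite /a ffunE; move: (H j); by case: (lastact h j).
Qed.

Lemma actvec_spec (h : history A) a : actvec h = Some a -> forall j, lastact h j = Some (a j).
Proof. by rewrite /actvec; case: pickP => // b /forallP H [<-] j; apply/eqP. Qed.

Definition wv (h : history A) (s : nat) : vertex A :=
  (odflt a0 (actvec (take s h)), Ordinal (ltn_pmod s.+1 hk)).

Lemma wv_some (h : history A) s : prob sigma h != 0 -> (k <= s)%N -> (s <= size h)%N ->
  actvec (take s h) = Some (wv h s).1.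
Proof.
move=> g ks sh.
suff : actvec (take s h) != None by rewrite /wv /=; case: (actvec _).
apply: actvec_some => j.
pose r := ((j + k.-1) %% k)%N.
have rk : (r < k)%N by rewrite ltn_mod.
pose m0 : move A := Tagged (fun i => A i) (a0 j).
have rs : (r < size h)%N by apply: leq_trans sh; apply: leq_trans ks.
apply: (@lastactr_some _ _ (nth m0 h r)).
  rewrite mem_rev -(nth_take m0 (leq_trans rk ks)); apply: mem_nth.
  by rewrite size_take; case: ifP => // _; apply: leq_trans ks.
have := prob_ok g m0 rs; rewrite /mover_ok => /eqP E; apply: val_inj.
rewrite /= E /r modSmod -addnS prednK // modnDr modn_small //.
Qed.

Lemma wv_edge (h : history A) s : prob sigma h != 0 -> (k <= s)%N -> (s < size h)%N ->
  gedge (wv h s) (wv h s.+1).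
Proof.
move=> g ks sh; rewrite /gedge /= modSmod eqxx /=.
have Ea := wv_some g ks (ltnW sh).
have Eb := wv_some g (leq_trans ks (leqnSn s)) sh.
pose m := nth (Tagged (fun i => A i) (a0 (Ordinal (ltn_pmod s.+1 hk)))) h s.
have tm : (tag m : nat) = (s.+1 %% k)%N by apply/eqP; apply: (prob_ok g _ sh).
apply/forallP => j; apply/implyP => nej.
have nej' : tag m != j.
  by apply: contra nej => /eqP <-; apply/eqP/val_inj; rewrite /= tm.
have H1 := actvec_spec Ea j; have H2 := actvec_spec Eb j.
rewrite /lastact (take_nth (Tagged (fun i => A i) (a0 (Ordinal (ltn_pmod s.+1 hk)))) sh) rev_rcons in H2.
rewrite lastactr_cons_ne // in H2.
change ((wv h s).1 j == (wv h s.+1).1 j).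
by move: H1; rewrite /lastact H2 => -[->].
Qed.

Lemma round_util_wv (u : forall i : 'I_k, profile A -> R) i (h : history A) s :
  prob sigma h != 0 -> (k < s)%N -> (s <= size h)%N ->
  round_util u i s (take s h) = u i (wv h s).1.
Proof.
move=> g ks sh; rewrite /round_util leqNgt ks /=.
by rewrite (wv_some g (ltnW ks) sh).
Qed.

Lemma path_wv (h : history A) n s0 : prob sigma h != 0 -> (k <= s0)%N -> (s0 + n <= size h)%N ->
  path (@gedge k A) (wv h s0) [seq wv h s | s <- iota s0.+1 n].
Proof.
move=> g; elim: n s0 => [//|n IH] s0 ks sh /=.
rewrite wv_edge //; last by apply: leq_trans sh; rewrite -addSnnS leq_addr.
by apply: IH; [apply: leq_trans ks _ | rewrite addSnnS].
Qed.

Lemma last_iota s0 n : last s0 (iota s0.+1 n) = (s0 + n)%N.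
Proof. by elim: n s0 => [|n IH] s0 /=; [rewrite addn0 | rewrite IH addSnnS]. Qed.

Lemma last_wv (h : history A) n s0 :
  last (wv h s0) [seq wv h s | s <- iota s0.+1 n] = wv h (s0 + n).
Proof. by rewrite last_map last_iota. Qed.

End Walk.

Section Conn.
Variables (k : nat) (hk : (0 < k)%N) (A : 'I_k -> finType).

Definition stepv (b : profile A) (v : vertex A) : vertex A :=
  (finfun (fun j => if j == v.2 then b j else v.1 j) : profile A, Ordinal (ltn_pmod (v.2).+1 hk)).

Lemma gedge_step b v : gedge v (stepv b v).
Proof.
rewrite /gedge /= eqxx /=; apply/forallP => j; apply/implyP => nj.
by rewrite ffunE (negbTE nj).
Qed.

Lemma iter_step b v n : ((iter n (stepv b) v).2 : nat) = ((v.2 + n) %% k)%N /\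
  forall j : 'I_k, (exists r, (r < n)%N /\ ((v.2 + r) %% k)%N = j) -> (iter n (stepv b) v).1 j = b j.
Proof.
elim: n => [|n [IH1 IH2]].
  by rewrite addn0 modn_small //; split => // j [r [] //].
split; first by rewrite iterS /= IH1 modSmod addnS.
move=> j [r [rn E]]; rewrite iterS /= ffunE.
case: eqP => // nj; apply: IH2; exists r; split => //.
move: rn; rewrite ltnS leq_eqVlt => /orP [/eqP er|] //.
by exfalso; apply: nj; apply: val_inj; rewrite /= IH1 -E er.
Qed.

Definition conn (v y : vertex A) : seq (vertex A) :=
  traject (stepv y.1) (stepv y.1 v) (k + (y.2 + (k - v.2)) %% k).

Lemma conn_spec v y : [/\ path (@gedge k A) v (conn v y), last v (conn v y) = y,
   (0 < size (conn v y))%N & (size (conn v y) <= 2 * k)%N].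
Proof.
have v2 := ltn_ord v.2; have y2 := ltn_ord y.2.
split.
- by apply: (sub_path _ (fpath_traject _ _ _)) => x z /eqP <-; apply: gedge_step.
- rewrite /conn last_traject; have [I1 I2] := iter_step y.1 v (k + (y.2 + (k - v.2)) %% k).
  case: y I1 I2 y2 => b j /= I1 I2 y2; apply: injective_projections => /=.
    apply/ffunP => j'; apply: I2; exists (((j' : nat) + (k - v.2)) %% k)%N; split.
      by apply: leq_trans (ltn_pmod _ hk) (leq_addr _ _).
    rewrite modnDmr; have -> : (v.2 + (j' + (k - v.2)) = j' + k)%N by lia.
    by rewrite modnDr modn_small.
  apply: val_inj; rewrite /= I1 addnA modnDmr.
  have -> : (v.2 + k + (j + (k - v.2)) = j + k + k)%N by lia.
  by rewrite !modnDr modn_small.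
- by rewrite size_traject; apply: leq_trans hk (leq_addr _ _).
- rewrite size_traject mul2n -addnn leq_add2l; exact: ltnW (ltn_pmod _ hk).
Qed.

End Conn.

Section Main.
Variables (R : realType) (k : nat) (hk : (0 < k)%N) (A : 'I_k -> finType).
Variable u : forall i : 'I_k, profile A -> R.
Hypothesis hu : forall i a, -1 <= u i a <= 1.
Variable sigma : forall i : 'I_k, strategy R A i.
Hypothesis hsigma : is_mixed_profile sigma.
Variable a0 : profile A.

Definition U i (t : nat) (h : history A) : R := \sum_(1 <= s < t.+1) round_util u i s (take s h).

Lemma round_util_bound i s h : -1 <= round_util u i s h <= 1.
Proof.
rewrite /round_util; case: ifP => _; first by rewrite lerN10 ler01.
by case: (actvec h) => [a|]; [exact: hu | rewrite lerN10 ler01].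
Qed.

Lemma U_le i t h : U i t h <= t%:R.
Proof.
rewrite /U (@le_trans _ _ (\sum_(1 <= s < t.+1) (1 : R))) //.
  by apply: ler_sum => s _; case/andP: (round_util_bound i s (take s h)).
by rewrite sumr_const_nat subn1 /=.
Qed.

Lemma U_split i t h : (k <= t)%N ->
  U i t h = \sum_(k.+1 <= s < t.+1) round_util u i s (take s h).
Proof.
move=> kt; rewrite /U (@big_cat_nat _ _ _ k.+1) //= big_nat big1 ?add0r //.
by move=> s /andP [_ sk]; rewrite /round_util -ltnS sk.
Qed.

Lemma U_ge i t h : (k <= t)%N -> - ((t - k)%:R) <= U i t h.
Proof.
move=> kt; rewrite U_split //.
rewrite (@le_trans _ _ (\sum_(k.+1 <= s < t.+1) (-1 : R))) //.
  by rewrite sumr_const_nat subSS mulNrn.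
by apply: ler_sum => s _; case/andP: (round_util_bound i s (take s h)).
Qed.

Lemma sum_prob1 t : \sum_(h : t.-tuple (move A)) prob sigma h = 1.
Proof. by have := sum_prob hk hsigma t [::]. Qed.

Lemma P_le1 i t : P u sigma i t <= 1.
Proof.
rewrite /P -[X in _ <= X](sum_prob1 t); apply: ler_sum => h _.
rewrite -[X in _ <= X]mulr1; apply: ler_wpM2l; first exact: prob_ge0.
case: t h => [|t] h; first by rewrite invr0 mul0r ler01.
by rewrite ler_pdivrMl ?ltr0Sn // mulr1 U_le.
Qed.

Lemma P_mulT i t : (0 < t)%N ->
  t%:R * P u sigma i t = \sum_(h : t.-tuple (move A)) prob sigma h * U i t h.
Proof.
move=> t0; rewrite /P mulr_sumr; apply: eq_bigr => h _.
by rewrite mulrA mulrCA mulrA mulKf // pnatr_eq0 -lt0n.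
Qed.

End Main.

Lemma liminf_ev (R : realType) (f : nat -> R) (hf : forall n, f n <= 1) (e : R) (he : 0 < e) :
  exists N, forall n, (N <= n)%N -> (limn_einf (fun n => (f n)%:E) - e%:E <= (f n)%:E)%E.
Proof.
set u := (fun n => (f n)%:E).
have L : limn_einf u = ereal_sup (range (einfs u)).
  rewrite limn_einf_lim; apply: cvg_lim => //; exact: cvg_einfs_sup.
have einf_le : forall N n, (N <= n)%N -> (einfs u N <= u n)%E.
  by move=> N n Nn; apply: ereal_inf_lbound; exists n.
case E : (limn_einf u) => [r| |].
- have : ((r - e)%:E < ereal_sup (range (einfs u)))%E.
    by rewrite -L E lte_fin ltrBlDr ltrDl.
  move=> /ereal_sup_gt [y [N _ <-]] Hy; exists N => n Nn.
  rewrite -EFinB; apply/ltW; apply: (lt_le_trans Hy); exact: einf_le.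
- exfalso; have : (limn_einf u <= 1%:E)%E.
    rewrite L; apply: ge_ereal_sup => y [N _ <-].
    by apply: (le_trans (einf_le N N (leqnn N))); rewrite lee_fin.
  by rewrite E.
- by exists 0%N => n _; rewrite leNye.
Qed.

Section Cons.
Variables (R : realType) (k : nat) (hk : (0 < k)%N) (A : 'I_k -> finType).
Variable u : forall i : 'I_k, profile A -> R.
Hypothesis hu : forall i a, -1 <= u i a <= 1.
Variable sigma : forall i : 'I_k, strategy R A i.
Hypothesis hsigma : is_mixed_profile sigma.
Variable a0 : profile A.
Variables (T M : nat).
Hypothesis kT : (k < T)%N.

Definition x0 : vertex A := (a0, Ordinal hk).
Definition walk (h : history A) := [seq wv hk a0 h s | s <- iota k.+1 (T - k)].
Definition block (h : history A) :=
  conn hk x0 (wv hk a0 h k) ++ walk h ++ conn hk (wv hk a0 h T) x0.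
Definition nh (h : T.-tuple (move A)) : nat := Num.truncn (M%:R * prob sigma h).
Definition Hs := flatten [seq nseq (nh h) h | h <- enum {: T.-tuple (move A)}].
Definition bigp := flatten [seq block h | h : T.-tuple (move A) <- Hs].

Lemma nh_good h : (0 < nh h)%N -> prob sigma h != 0.
Proof.
rewrite /nh truncn_gt0; apply: contraTneq => ->; by rewrite mulr0 ler10.
Qed.

Lemma block_closed (h : history A) : prob sigma h != 0 -> size h = T ->
  path (@gedge k A) x0 (block h) && (last x0 (block h) == x0).
Proof.
move=> g sh.
have [c1p c1l _ _] := conn_spec hk x0 (wv hk a0 h k).
have [c2p c2l _ _] := conn_spec hk (wv hk a0 h T) x0.
have wp : path (@gedge k A) (wv hk a0 h k) (walk h).
  by apply: (path_wv hk a0 g) => //; rewrite sh; lia.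
have wl : last (wv hk a0 h k) (walk h) = wv hk a0 h T.
  by rewrite /walk last_wv; congr wv; lia.
rewrite /block cat_path c1p c1l /= cat_path wp wl c2p /=.
by rewrite !last_cat c1l wl c2l eqxx.
Qed.

Lemma closed_flatten (x : vertex A) (bs : seq (seq (vertex A))) :
  (forall b, b \in bs -> path (@gedge k A) x b && (last x b == x)) ->
  path (@gedge k A) x (flatten bs) && (last x (flatten bs) == x).
Proof.
elim: bs => [|b bs IH] H /=; first by rewrite eqxx.
have /andP [pb /eqP lb] := H b (mem_head _ _).
have /andP [pr lr] : path (@gedge k A) x (flatten bs) && (last x (flatten bs) == x).
  by apply: IH => b' bb'; apply: H; rewrite inE bb' orbT.
by rewrite cat_path pb lb pr last_cat lb lr.
Qed.

Lemma bigp_closed : path (@gedge k A) x0 bigp && (last x0 bigp == x0).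
Proof.
apply: closed_flatten => b /mapP [h hH ->].
move: hH => /flattenP [s /mapP [h' _ ->]]; rewrite mem_nseq => /andP [n0 /eqP ->].
by apply: block_closed; [exact: nh_good | exact: size_tuple].
Qed.

Lemma sum_nseq (n : nat) (x : T.-tuple (move A)) (F : T.-tuple (move A) -> R) :
  \sum_(y <- nseq n x) F y = n%:R * F x.
Proof. by elim: n => [|n IH]; rewrite ?big_nil ?mul0r // big_cons IH -add1n natrD mulrDl mul1r. Qed.

Lemma sum_bigp (g : vertex A -> R) :
  \sum_(v <- bigp) g v = \sum_(h : T.-tuple (move A)) (nh h)%:R * \sum_(v <- block h) g v.
Proof.
rewrite /bigp big_flatten /= big_map /Hs big_flatten /= big_map big_enum /=.
by apply: eq_bigr => h _; rewrite sum_nseq.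
Qed.

Lemma size_sum (X : Type) (s : seq X) : (size s)%:R = \sum_(v <- s) (1 : R).
Proof. by elim: s => [|x s IH]; rewrite ?big_nil // big_cons /= -add1n natrD IH. Qed.

Lemma block_size (h : history A) : (size (block h) <= T + 3 * k)%N.
Proof.
have [_ _ _ s1] := conn_spec hk x0 (wv hk a0 h k).
have [_ _ _ s2] := conn_spec hk (wv hk a0 h T) x0.
rewrite /block !size_cat /walk size_map size_iota; lia.
Qed.

Lemma block_sum (i : 'I_k) (h : history A) : prob sigma h != 0 -> size h = T ->
  U u i T h + (T - k)%:R <= \sum_(v <- block h) (u i v.1 + 1).
Proof.
move=> g sh.
have f0 : forall v : vertex A, 0 <= u i v.1 + 1.
  by move=> v; case/andP: (hu i v.1) => H _; rewrite -lerBlDr sub0r.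
rewrite /block !big_cat /=.
have -> : \sum_(v <- walk h) (u i v.1 + 1) = U u i T h + (T - k)%:R.
  rewrite /walk big_map big_split -size_sum size_iota.
  rewrite U_split; last exact: ltnW.
  congr (_ + _).
  have -> : iota k.+1 (T - k) = index_iota k.+1 T.+1 by rewrite /index_iota subSS.
  apply: eq_big_nat => s /andP [ks sT].
  by rewrite (round_util_wv hk a0 u i g ks) // sh -ltnS.
rewrite addrCA lerDl; apply: addr_ge0; apply: sumr_ge0 => v _; exact: f0.
Qed.


Lemma key (i : 'I_k) (a : R) (ha : 0 < a)
  (hT : 28 * k%:R <= a * T%:R)
  (hM : 8 * (#|{: T.-tuple (move A)}|)%:R <= a * M%:R)
  (hM2 : (#|{: T.-tuple (move A)}| <= M)%N) :
  (0 < size bigp)%N /\ P u sigma i T - a / 2 <= avg_weight u i bigp.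
Proof.
set H := #|{: T.-tuple (move A)}|.
have pg := @prob_ge0 _ _ _ sigma hsigma.
have F1 (h : T.-tuple (move A)) : (nh h)%:R <= M%:R * prob sigma h.
  by rewrite /nh truncn_le mulr_ge0.
have F2 (h : T.-tuple (move A)) : M%:R * prob sigma h - 1 < (nh h)%:R.
  by rewrite ltrBlDr natr1 /nh; exact: truncnS_gt.
have F3 : \sum_h ((nh h)%:R : R) <= M%:R.
  rewrite (le_trans (ler_sum _ (fun h _ => F1 h))) //.
  by rewrite -mulr_sumr (sum_prob1 hk hsigma) mulr1.
set N : R := (size bigp)%:R.
set f := fun v : vertex A => u i v.1 + 1.
have f0 : forall v : vertex A, 0 <= f v.
  by move=> v; case/andP: (hu i v.1) => Hv _; rewrite /f -lerBlDr sub0r.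
have NE : N = \sum_h (nh h)%:R * (size (block h))%:R.
  by rewrite /N size_sum sum_bigp; apply: eq_bigr => h _; rewrite size_sum.
have NM : N <= M%:R * (T + 3 * k)%:R.
  have BS (h : T.-tuple (move A)) : (size (block h))%:R <= (T + 3 * k)%:R :> R.
    by rewrite ler_nat block_size.
  rewrite NE (le_trans (ler_sum _ (fun h _ => ler_wpM2l (ler0n _ _) (BS h)))) //.
  rewrite -mulr_suml; apply: ler_wpM2r => //.
have N0 : 0 < N.
  have BS1 (h : T.-tuple (move A)) : 1 <= (size (block h))%:R :> R.
    have [_ _ c0 _] := conn_spec hk x0 (wv hk a0 h k).
    by rewrite ler1n /block size_cat; apply: leq_trans c0 (leq_addr _ _).
  have NS : \sum_h ((nh h)%:R : R) <= N.
    rewrite NE; apply: ler_sum => h _; rewrite -[X in X <= _]mulr1.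
    by apply: ler_wpM2l.
  apply: lt_le_trans NS.
  pose m0 : move A := Tagged (fun j => A j) (a0 (Ordinal hk)).
  pose h0 : T.-tuple (move A) := nseq_tuple T m0.
  have SS : \sum_(h : T.-tuple (move A)) (M%:R * prob sigma h - 1) < \sum_h ((nh h)%:R : R).
    rewrite [X in X < _](bigD1 h0) // [X in _ < X](bigD1 h0) //=.
    by apply: ltr_leD; [exact: F2 | apply: ler_sum => h _; apply/ltW/F2].
  apply: le_lt_trans SS.
  rewrite sumrB -mulr_sumr (sum_prob1 hk hsigma) mulr1 sumr_const -/H.
  by rewrite subr_ge0 -/H ler_nat.
split; first by move: N0; rewrite /N ltr0n.
set S := \sum_(v <- bigp) f v.
have S0 : 0 <= S by apply: sumr_ge0 => v _; exact: f0.
have AV : avg_weight u i bigp = S / N - 1.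
  rewrite /avg_weight /S /f big_split /= -size_sum -/N.
  by field; rewrite gt_eqF.
set g := fun h : T.-tuple (move A) => U u i T h + (T - k)%:R.
have kT' : (k <= T)%N by apply: ltnW.
have g0 h : 0 <= g h by rewrite /g -lerBlDr sub0r; apply: U_ge.
have g2 h : g h <= 2 * T%:R.
  rewrite /g mulr2n mulrDl mul1r; apply: lerD; first exact: U_le.
  by rewrite ler_nat leq_subr.
have SL : \sum_h (nh h)%:R * g h <= S.
  rewrite /S sum_bigp; apply: ler_sum => h _.
  case: (posnP (nh h)) => [->|pos]; first by rewrite !mul0r.
  apply: ler_wpM2l => //; apply: block_sum => //; [exact: nh_good | exact: size_tuple].
have SG : \sum_(h : T.-tuple (move A)) (M%:R * prob sigma h - 1) * g h <= \sum_h (nh h)%:R * g h.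
  by apply: ler_sum => h _; apply: ler_wpM2r => //; apply/ltW/F2.
have PG : \sum_(h : T.-tuple (move A)) prob sigma h * g h = T%:R * P u sigma i T + (T - k)%:R.
  rewrite /g; under eq_bigr do rewrite mulrDr.
  rewrite big_split /= -mulr_suml (sum_prob1 hk hsigma) mul1r P_mulT //.
  exact: leq_ltn_trans kT.
have SE : \sum_(h : T.-tuple (move A)) (M%:R * prob sigma h - 1) * g h =
    M%:R * (T%:R * P u sigma i T + (T - k)%:R) - \sum_h g h.
  under eq_bigr do rewrite mulrBl mul1r.
  by rewrite sumrB -PG mulr_sumr; congr (_ - _); apply: eq_bigr => h _; rewrite mulrA.
have SB : \sum_h g h <= H%:R * (2 * T%:R).
  apply: le_trans (ler_sum _ (fun h _ => g2 h)) _.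
  rewrite sumr_const -[_ *+ _]mulr_natl; apply: le_refl.
have PL := P_le1 hk hu hsigma i T.
have X : (P u sigma i T + 1 - a / 2) * (M%:R * (T + 3 * k)%:R) <=
    M%:R * (T%:R * P u sigma i T + (T - k)%:R) - H%:R * (2 * T%:R).
  rewrite natrD natrM natrB //.
  set p := P u sigma i T; set t : R := T%:R; set kk : R := k%:R; set m : R := M%:R.
  set hh : R := H%:R.
  have t0 : 0 <= t by apply: ler0n.
  have k0 : 0 <= kk by apply: ler0n.
  have m0 : 0 <= m by apply: ler0n.
  have h1 : 0 <= m * kk * (1 - p) by apply: mulr_ge0; [apply: mulr_ge0 | rewrite subr_ge0].
  have h2 : 0 <= m * (a * t - 28 * kk) by apply: mulr_ge0 => //; rewrite subr_ge0.
  have h3 : 0 <= t * (a * m - 8 * hh) by apply: mulr_ge0 => //; rewrite subr_ge0.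
  have h4 : 0 <= a * m * kk by apply: mulr_ge0 => //; apply: mulr_ge0 => //; apply: ltW.
  nra.
rewrite AV lerBrDr -addrA [- _ + _]addrC addrA ler_pdivlMr //.
have [c0|c0] := leP 0 (P u sigma i T + 1 - a / 2).
  apply: le_trans (ler_wpM2l c0 NM) _; apply: le_trans X _.
  apply: le_trans SL; apply: le_trans SG; rewrite SE; exact: lerB.
apply: le_trans S0 ; apply: mulr_le0_ge0; apply: ltW => //.
Qed.


End Cons.
Unset Implicit Arguments.

Theorem lemma6 (R : realType) (k : nat) (hk : (0 < k)%N) (A : 'I_k -> finType)
    (u : forall i : 'I_k, profile A -> R)
    (hu : forall i a, -1 <= u i a <= 1)
    (sigma : forall i : 'I_k, strategy R A i)
    (hsigma : is_mixed_profile sigma)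
    (alpha : R) (halpha : 0 < alpha) :
  exists (x : vertex A) (p : seq (vertex A)),
    cyclic_path x p /\
    forall i : 'I_k,
      (game_utility u sigma i - alpha%:E <= (avg_weight u i p)%:E)%E.
Proof.
have ex_a : forall i, exists a : A i, true.
  move=> i; case: (pickP (fun _ : A i => true)) => [a _|Hn]; first by exists a.
  exfalso; have := (hsigma i [::]).2; rewrite big1 => [/eqP|a _]; last by have := Hn a.
  by rewrite eq_sym oner_eq0.
pose a0 : profile A := finfun (fun i => xchoose (ex_a i)).
have ha2 : 0 < alpha / 2 by rewrite divr_gt0.
have HN : forall i, exists N, forall n, (N <= n)%N ->
    (game_utility u sigma i - (alpha / 2)%:E <= (P u sigma i n)%:E)%E.
  move=> i; apply: liminf_ev => // n; apply: (P_le1 hk hu hsigma).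
have [Nf HNf] := choice HN.
pose T := maxn k.+1 (maxn (\max_(i < k) Nf i) (Num.truncn (28 * k%:R / alpha)).+1).
have kT : (k < T)%N by rewrite leq_max leqnn.
have NT : forall i, (Nf i <= T)%N.
  move=> i; rewrite !leq_max; apply/orP; right; apply/orP; left.
  by apply: (leq_bigmax_cond (F := Nf) i).
have hT : 28 * k%:R <= alpha * T%:R.
  rewrite [alpha * _]mulrC -ler_pdivrMr //; apply: ltW; apply: (lt_le_trans (truncnS_gt _)).
  by rewrite ler_nat !leq_max leqnn !orbT.
pose H := #|{: T.-tuple (move A)}|.
pose M := maxn H (Num.truncn (8 * H%:R / alpha)).+1.
have hM : 8 * H%:R <= alpha * M%:R.
  rewrite [alpha * _]mulrC -ler_pdivrMr //; apply: ltW; apply: (lt_le_trans (truncnS_gt _)).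
  by rewrite ler_nat leq_max leqnn orbT.
have hM2 : (H <= M)%N by rewrite leq_max leqnn.
exists (x0 hk a0), (bigp hk sigma a0 T M).
have [sz _] := key hk hu hsigma a0 (M:=M) kT (Ordinal hk) halpha hT hM hM2.
split.
  by rewrite /cyclic_path sz /=; exact: bigp_closed.
move=> i; have [_ Hav] := key hk hu hsigma a0 (M:=M) kT i halpha hT hM hM2.
have := HNf i T (NT i).
case: (game_utility u sigma i) => [r| |] //=; rewrite ?leNye //.
rewrite -!EFinB !lee_fin => Hr.
have -> : r - alpha = r - alpha / 2 - alpha / 2 by field.
apply: le_trans Hav; exact: lerB.
Qed.
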